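(* For the Bell-state measurement $\Phi=(\Phi^b)_{b=0}^3$ on $\mathbb{C}^2\otimes\mathbb{C}^2$, $Q_{\mathrm{sep}}(\Phi)=\tfrac12$.
   Context: Bell states: $|\Phi^0\rangle=(|00\rangle+|11\rangle)/\sqrt2$, $|\Phi^1\rangle=(|00\rangle-|11\rangle)/\sqrt2$, $|\Phi^2\rangle=(|01\rangle+|10\rangle)/\sqrt2$, $|\Phi^3\rangle=(|01\rangle-|10\rangle)/\sqrt2$, $\Phi^b=|\Phi^b\rangle\langle\Phi^b|$. $Q_{\mathrm{sep}}(\mathscr{P}):=\frac{1}{|B_1'||B_2'|}\max_{\mathscr{F}\in\mathcal{M}_{\mathrm{sep}}}\sum_{j}\operatorname{tr}(F^jP^j)$, where $\mathcal{M}_{\mathrm{sep}}$ is the set of POVMs with the same number of outcomes on $\mathcal{H}_{B_1'}\otimes\mathcal{H}_{B_2'}$ (here $\mathbb{C}^2\otimes\mathbb{C}^2$) whose elements are all separable operators. *)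

(* Defs.v *)
(* Complex scalars: an arbitrary numClosedFieldType C
   (e.g. algC, or the genuine complex numbers). *)
From HB Require Import structures.
From mathcomp Require Import all_boot all_order all_algebra.
Set Implicit Arguments. Unset Strict Implicit. Unset Printing Implicit Defensive.
Import Order.TTheory GRing.Theory Num.Theory.
Local Open Scope ring_scope.

Section Defs.
Variable C : numClosedFieldType.

Definition adjmx m n (A : 'M[C]_(m, n)) : 'M[C]_(n, m) := map_mx Num.conj A^T.

Definition psd n (A : 'M[C]_n) : Prop :=
  forall v : 'cV[C]_n, 0 <= (adjmx v *m A *m v) 0 0.

(* Kronecker (tensor) product of two qubit operators on C^2 (x) C^2;
   the basis vector |a b> of C^2 (x) C^2 has index 2*a + b in 'I_(2*2). *)
Definition kron2 (A B : 'M[C]_2) : 'M[C]_(2 * 2) :=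
  \matrix_(i, j) (A (inord (i %/ 2)) (inord (j %/ 2)) *
                  B (inord (i %% 2)) (inord (j %% 2))).

Definition separable (F : 'M[C]_(2 * 2)) : Prop :=
  exists s : seq ('M[C]_2 * 'M[C]_2),
    (forall p, p \in s -> psd p.1 /\ psd p.2) /\
    F = \sum_(p <- s) kron2 p.1 p.2.

Definition sep_POVM (F : 'I_4 -> 'M[C]_(2 * 2)) : Prop :=
  (forall j, psd (F j)) /\ (forall j, separable (F j)) /\ \sum_j F j = 1%:M.

Definition ket (a b : 'I_2) : 'cV[C]_(2 * 2) :=
  \col_(i < 2 * 2) ((i == (2 * a + b)%N :> nat)%:R).

Definition bellv (b : 'I_4) : 'cV[C]_(2 * 2) :=
  match val b with
  | 0 => ket 0 0 + ket 1 1
  | 1 => ket 0 0 - ket 1 1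
  | 2 => ket 0 1 + ket 1 0
  | _ => ket 0 1 - ket 1 0
  end.

(* Bell projectors Phi^b = |Phi^b><Phi^b|, |Phi^b> = bellv b / sqrt 2 *)
Definition Bell (b : 'I_4) : 'M[C]_(2 * 2) :=
  2^-1 *: (bellv b *m adjmx (bellv b)).

(* objective value of a POVM: 1/(|B1'||B2'|) * sum_j tr(F^j Phi^j) *)
Definition sep_value (F : 'I_4 -> 'M[C]_(2 * 2)) : C :=
  (2 * 2)%:R^-1 * \sum_j \tr (F j *m Bell j).

Definition Qsep_Bell_is (q : C) : Prop :=
  (forall F, sep_POVM F -> sep_value F <= q) /\
  (exists F, sep_POVM F /\ sep_value F = q).

End Defs.

(* Main.v *)
Require Import Defs.
From HB Require Import structures.
From mathcomp Require Import all_boot all_order all_algebra ring.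
Import Order.TTheory GRing.Theory Num.Theory.
Local Open Scope ring_scope.
Set Implicit Arguments. Unset Strict Implicit.

Section S.
Variable C : numClosedFieldType.

Lemma sum4 (F : 'I_4 -> C) :
  \sum_i F i = F (inord 0) + F (inord 1) + F (inord 2) + F (inord 3).
Proof.
rewrite !big_ord_recr big_ord0 /= add0r.
by congr (F _ + F _ + F _ + F _); apply/val_inj; rewrite /= inordK.
Qed.

Lemma sum2 (F : 'I_2 -> C) : \sum_i F i = F (inord 0) + F (inord 1).
Proof.
rewrite !big_ord_recr big_ord0 /= add0r.
by congr (F _ + F _); apply/val_inj; rewrite /= inordK.
Qed.

Lemma ketE (a b : 'I_2) : ket C a b = delta_mx (inord (2 * a + b)) 0.
Proof.
apply/matrixP => i j; rewrite !mxE (ord1 j) eqxx andbT.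
have hl : (2 * a + b < 4)%N.
  case: a b => [[|[|//]] ?] [[|[|//]] ?] //.
by rewrite -val_eqE /= inordK.
Qed.

Lemma adjD m n (A B : 'M[C]_(m,n)) : adjmx (A + B) = adjmx A + adjmx B.
Proof. by apply/matrixP => i j; rewrite !mxE rmorphD. Qed.
Lemma adjN m n (A : 'M[C]_(m,n)) : adjmx (- A) = - adjmx A.
Proof. by apply/matrixP => i j; rewrite !mxE rmorphN. Qed.
Lemma adj_delta n (p : 'I_n) : adjmx (delta_mx p (0 : 'I_1)) = delta_mx 0 p :> 'M[C]_(1,n).
Proof. by apply/matrixP => i j; rewrite !mxE rmorph_nat andbC. Qed.

Lemma delta_entry n (M : 'M[C]_n) (p q : 'I_n) :
  (delta_mx (0 : 'I_1) p *m M *m delta_mx q (0:'I_1)) 0 0 = M p q.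
Proof. by rewrite -rowE -colE !mxE. Qed.

Lemma tr_rank1 (M : 'M[C]_(2*2)) (u : 'cV_(2*2)) :
  \tr (M *m (2^-1 *: (u *m adjmx u))) = 2^-1 * (adjmx u *m M *m u) 0 0.
Proof.
rewrite -scalemxAr linearZ /= mulmxA mxtrace_mulC mulmxA trace_mx11 //.
Qed.

Lemma mxDE m n (A B : 'M[C]_(m,n)) i j : (A + B) i j = A i j + B i j.
Proof. by rewrite mxE. Qed.
Lemma mxNE m n (A : 'M[C]_(m,n)) i j : (- A) i j = - A i j.
Proof. by rewrite mxE. Qed.
Notation i0 := (inord 0 : 'I_2).
Notation i1 := (inord 1 : 'I_2).

Lemma kron2E (A B : 'M[C]_2) (k l : nat) : (k < 4)%N -> (l < 4)%N ->
  kron2 A B (inord k) (inord l) = A (inord (k %/ 2)) (inord (l %/ 2)) * B (inord (k %% 2)) (inord (l %% 2)).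
Proof. by move=> hk hl; rewrite mxE !inordK. Qed.

Lemma ket00 : ket C 0 0 = delta_mx (inord 0) 0. Proof. by rewrite ketE. Qed.
Lemma ket01 : ket C 0 1 = delta_mx (inord 1) 0. Proof. by rewrite ketE. Qed.
Lemma ket10 : ket C 1 0 = delta_mx (inord 2) 0. Proof. by rewrite ketE. Qed.
Lemma ket11 : ket C 1 1 = delta_mx (inord 3) 0. Proof. by rewrite ketE. Qed.

Ltac trb := rewrite /Bell /bellv /= ?ket00 ?ket01 ?ket10 ?ket11 tr_rank1 ?adjD ?adjN !adj_delta;
  rewrite ?mulmxDl ?mulmxDr ?mulNmx ?mulmxN ?mxDE ?mxNE !delta_entry !kron2E //=; ring.

Lemma trBell0 (A B : 'M[C]_2) : \tr (kron2 A B *m Bell C 0) =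
  2^-1 * (A i0 i0 * B i0 i0 + A i0 i1 * B i0 i1 + A i1 i0 * B i1 i0 + A i1 i1 * B i1 i1).
Proof. trb. Qed.
Lemma trBell1 (A B : 'M[C]_2) : \tr (kron2 A B *m Bell C 1) =
  2^-1 * (A i0 i0 * B i0 i0 - A i0 i1 * B i0 i1 - A i1 i0 * B i1 i0 + A i1 i1 * B i1 i1).
Proof. trb. Qed.
Lemma trBell2 (A B : 'M[C]_2) : \tr (kron2 A B *m Bell C 2) =
  2^-1 * (A i0 i0 * B i1 i1 + A i0 i1 * B i1 i0 + A i1 i0 * B i0 i1 + A i1 i1 * B i0 i0).
Proof. trb. Qed.
Lemma trBell3 (A B : 'M[C]_2) : \tr (kron2 A B *m Bell C 3) =
  2^-1 * (A i0 i0 * B i1 i1 - A i0 i1 * B i1 i0 - A i1 i0 * B i0 i1 + A i1 i1 * B i0 i0).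
Proof. trb. Qed.
Lemma trK (A B : 'M[C]_2) : \tr (kron2 A B) =
  (A i0 i0 + A i1 i1) * (B i0 i0 + B i1 i1).
Proof. rewrite /mxtrace sum4 !kron2E //=; ring. Qed.
Definition psdq (a b c d : C) := forall x y : C,
  0 <= x^* * a * x + x^* * b * y + y^* * c * x + y^* * d * y.

Lemma psdq_d0 a b c d : psdq a b c d -> 0 <= a.
Proof. move=> h; have := h 1 0; by rewrite rmorph1 rmorph0 !(mul0r, mulr0, addr0, mul1r, mulr1). Qed.
Lemma psdq_d3 a b c d : psdq a b c d -> 0 <= d.
Proof. move=> h; have := h 0 1; by rewrite rmorph1 rmorph0 !(mul0r, mulr0, add0r, mul1r, mulr1). Qed.

Lemma two_neq0 : (2 : C) != 0.
Proof. by rewrite pnatr_eq0. Qed.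

Lemma psdq_herm a b c d : psdq a b c d -> c = b^*.
Proof.
move=> h.
have ra := geC0_conj (psdq_d0 h); have rd := geC0_conj (psdq_d3 h).
have E1 : b^* + c^* = b + c.
  have := geC0_conj (h 1 1); rewrite rmorph1 !(mul1r, mulr1) !rmorphD /= ra rd => e.
  have : a + (b^* + c^*) + d = a + (b + c) + d.
    by rewrite !addrA e.
  by move/addIr/addrI.
have E2 : c^* - b^* = b - c.
  have := geC0_conj (h 1 'i); rewrite rmorph1 conjCi !(mul1r, mulr1) !rmorphD !rmorphM !rmorphN ?rmorphM /= ra rd conjCi opprK.
  move=> e.
  have e2 : 'i * (c^* - b^*) = 'i * (b - c).
    transitivity ((a + b^* * - 'i + 'i * c^* + 'i * d * - 'i) - a - 'i * d * (- 'i)); first ring.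
    rewrite e; ring.
  exact: (mulfI (@neq0Ci C) e2).
have : c^* = b.
  have -> : c^* = ((b^* + c^*) + (c^* - b^*)) / 2 by field.
  by rewrite E1 E2; field.
by move=> <-; rewrite conjCK.
Qed.

Lemma key a0 a1 a2 a3 b0 b1 b2 b3 : psdq a0 a1 a2 a3 -> psdq b0 b1 b2 b3 ->
  a1 * b1 + a2 * b2 <= a0 * b3 + a3 * b0.
Proof.
move=> hA hB.
have ha0 := psdq_d0 hA; have ha3 := psdq_d3 hA.
have hb0 := psdq_d0 hB; have hb3 := psdq_d3 hB.
have ea2 := psdq_herm hA; have eb2 := psdq_herm hB. subst a2 b2.
rewrite -subr_ge0.
case: (eqVneq b3 0) => [b30|b3n0].
- subst b3.
  have b10 : b1 = 0.
    case: (eqVneq (b1 * b1^*) 0) => [/eqP|nz]; first by rewrite mul_conjC_eq0 => /eqP.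
    exfalso.
    have npos : 0 < b1 * b1^* by rewrite lt_def nz mul_conjC_ge0.
    have b01 : 0 < b0 + 1 by rewrite ltr_wpDl.
    have tpos : 0 < (b0 + 1) / (b1 * b1^*) by rewrite divr_gt0.
    have ct := geC0_conj (ltW tpos).
    have tn : (b0 + 1) / (b1 * b1^*) * (b1 * b1^*) = b0 + 1 by rewrite divfK.
    move: ct tn; set t := (b0 + 1) / _ => ct tn.
    have := hB 1 (- (t * b1^*)).
    rewrite rmorph1 rmorphN rmorphM /= ct conjCK.
    have -> : 1 * b0 * 1 + 1 * b1 * - (t * b1^*) + - (t * b1) * b1^* * 1 +
       - (t * b1) * 0 * - (t * b1^*) = b0 - 2 * (t * (b1 * b1^*)) by ring.
    rewrite tn.
    have -> : b0 - 2 * (b0 + 1) = - (b0 + 2) by ring.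
    rewrite oppr_ge0 => h.
    have h2 : 0 < b0 + 2 by rewrite ltr_wpDl.
    by have := lt_le_trans h2 h; rewrite ltxx.
  rewrite b10 rmorph0 !mulr0 !addr0 subr0 add0r.
  exact: mulr_ge0.
- have hb3p : 0 < b3 by rewrite lt_def b3n0 hb3.
  have cb3 := geC0_conj hb3.
  have hD : 0 <= b0 * b3 - b1 * b1^*.
    have := hB b3 (- b1^*).
    rewrite rmorphN /= conjCK cb3.
    have -> : b3 * b0 * b3 + b3 * b1 * - b1^* + - b1 * b1^* * b3 + - b1 * b3 * - b1^*
       = b3 * (b0 * b3 - b1 * b1^*) by ring.
    by rewrite pmulr_rge0.
  have := hA b3 (- b1).
  rewrite rmorphN /= cb3 => hQ.
  rewrite -(pmulr_rge0 _ hb3p).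
  have -> : b3 * (a0 * b3 + a3 * b0 - (a1 * b1 + a1^* * b1^*)) =
    (b3 * a0 * b3 + b3 * a1 * - b1 + - b1^* * a1^* * b3 + - b1^* * a3 * - b1)
    + a3 * (b0 * b3 - b1 * b1^*) by ring.
  by apply: addr_ge0 => //; apply: mulr_ge0.
Qed.
Lemma psd_delta n (k : 'I_n) : psd (delta_mx k k : 'M[C]_n).
Proof.
move=> v.
rewrite -(mul_delta_mx (0 : 'I_1)) !mulmxA -colE -mulmxA -rowE !mxE big_ord1 !mxE.
by rewrite mulrC mul_conjC_ge0.
Qed.

Lemma kron2_delta (a b : 'I_2) :
  kron2 (delta_mx a a) (delta_mx b b) = delta_mx (inord (2*a+b)) (inord (2*a+b)) :> 'M[C]_(2*2).
Proof.
apply/matrixP => i j; rewrite !mxE -natrM; congr (_ %:R).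
have h2 : forall k : 'I_(2*2), (k %/ 2 < 2)%N /\ (k %% 2 < 2)%N.
  by case=> [[|[|[|[|//]]]] ?].
have hab : (2 * a + b < 4)%N by case: a b => [[|[|//]] ?] [[|[|//]] ?].
have [hi1 hi2] := h2 i; have [hj1 hj2] := h2 j.
rewrite -!val_eqE /= !inordK //.
case: a b i j {h2 hab hi1 hi2 hj1 hj2} => [[|[|//]] ?] [[|[|//]] ?] [[|[|[|[|//]]]] ?] [[|[|[|[|//]]]] ?] //.
Qed.

Lemma i10 : (i1 == i0) = false.
Proof. by rewrite -val_eqE /= !inordK. Qed.
Lemma i01 : (i0 == i1) = false.
Proof. by rewrite -val_eqE /= !inordK. Qed.

Lemma psd_q (A : 'M[C]_2) : psd A -> psdq (A i0 i0) (A i0 i1) (A i1 i0) (A i1 i1).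
Proof.
move=> h x y.
have := h (\col_i (if i == i0 then x else y)).
rewrite !mxE !sum2 !mxE !sum2 !mxE eqxx i10 /=.
suff -> : (x^* * A i0 i0 + y^* * A i1 i0) * x + (x^* * A i0 i1 + y^* * A i1 i1) * y =
  x^* * A i0 i0 * x + x^* * A i0 i1 * y + y^* * A i1 i0 * x + y^* * A i1 i1 * y by [].
ring.
Qed.

Lemma psdq_swap a b c d : psdq a b c d -> psdq d c b a.
Proof.
move=> h x y; have := h y x.
suff -> : y^* * a * y + y^* * b * x + x^* * c * y + x^* * d * x =
  x^* * d * x + x^* * c * y + y^* * b * x + y^* * a * y by [].
ring.
Qed.

Lemma psdq_neg a b c d : psdq a b c d -> psdq a (-b) (-c) d.
Proof.
move=> h x y; have := h x (- y); rewrite rmorphN /=.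
suff -> : x^* * a * x + x^* * b * - y + - y^* * c * x + - y^* * d * - y =
  x^* * a * x + x^* * - b * y + y^* * - c * x + y^* * d * y by [].
ring.
Qed.

Lemma fin (L R D : C) : R - L = 2^-1 * D -> 0 <= D -> L <= R.
Proof.
move=> e hD; rewrite -subr_ge0 e; apply: mulr_ge0 => //.
by rewrite invr_ge0 ler0n.
Qed.

Lemma tr_prod (A B : 'M[C]_2) (j : 'I_4) : psd A -> psd B ->
  \tr (kron2 A B *m Bell C j) <= 2^-1 * \tr (kron2 A B).
Proof.
move=> hA hB; have qA := psd_q hA; have qB := psd_q hB.
rewrite trK.
move: qA qB.
set a0 := A i0 i0; set a1 := A i0 i1; set a2 := A i1 i0; set a3 := A i1 i1.
set b0 := B i0 i0; set b1 := B i0 i1; set b2 := B i1 i0; set b3 := B i1 i1.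
move=> qA qB.
case: j => [[|[|[|[|//]]]] hj].
- change (Bell C (Ordinal hj)) with (Bell C 0); rewrite trBell0 -/a0 -/a1 -/a2 -/a3 -/b0 -/b1 -/b2 -/b3.
  apply: (@fin _ _ (a0 * b3 + a3 * b0 - (a1 * b1 + a2 * b2))); first ring.
  by rewrite subr_ge0; exact: key qA qB.
- change (Bell C (Ordinal hj)) with (Bell C 1); rewrite trBell1 -/a0 -/a1 -/a2 -/a3 -/b0 -/b1 -/b2 -/b3.
  apply: (@fin _ _ (a0 * b3 + a3 * b0 - (a1 * - b1 + a2 * - b2))); first ring.
  by rewrite subr_ge0; exact: key qA (psdq_neg qB).
- change (Bell C (Ordinal hj)) with (Bell C 2); rewrite trBell2 -/a0 -/a1 -/a2 -/a3 -/b0 -/b1 -/b2 -/b3.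
  apply: (@fin _ _ (a0 * b0 + a3 * b3 - (a1 * b2 + a2 * b1))); first ring.
  by rewrite subr_ge0; exact: key qA (psdq_swap qB).
- change (Bell C (Ordinal hj)) with (Bell C 3); rewrite trBell3 -/a0 -/a1 -/a2 -/a3 -/b0 -/b1 -/b2 -/b3.
  apply: (@fin _ _ (a0 * b0 + a3 * b3 - (a1 * - b2 + a2 * - b1))); first ring.
  by rewrite subr_ge0; exact: key qA (psdq_neg (psdq_swap qB)).
Qed.

Lemma tr_sep (F : 'M[C]_(2*2)) (j : 'I_4) : separable F ->
  \tr (F *m Bell C j) <= 2^-1 * \tr F.
Proof.
move=> [s [hs ->]]; rewrite mulmx_suml !linear_sum /= mulr_sumr !big_seq.
by apply: ler_sum => p /hs [h1 h2]; exact: tr_prod.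
Qed.

Definition Popt (j : 'I_4) : 'M[C]_(2*2) :=
  match val j with
  | 0 => kron2 (delta_mx i0 i0) (delta_mx i0 i0)
  | 1 => kron2 (delta_mx i1 i1) (delta_mx i1 i1)
  | 2 => kron2 (delta_mx i0 i0) (delta_mx i1 i1)
  | _ => kron2 (delta_mx i1 i1) (delta_mx i0 i0)
  end.

Lemma Popt_sep j : separable (Popt j).
Proof.
have gen : forall a b : 'I_2, separable (kron2 (delta_mx a a) (delta_mx b b) : 'M[C]_(2*2)).
  move=> a b; exists [:: (delta_mx a a, delta_mx b b)]; split; last by rewrite big_seq1.
  by move=> p; rewrite inE => /eqP ->; split; apply: psd_delta.
rewrite /Popt; case: (val j) => [|[|[|?]]]; exact: gen.
Qed.

Lemma Popt_psd j : psd (Popt j).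
Proof.
rewrite /Popt; case: (val j) => [|[|[|?]]]; rewrite kron2_delta; exact: psd_delta.
Qed.

Lemma Popt_sum : \sum_j Popt j = 1%:M.
Proof.
rewrite !big_ord_recr big_ord0 /= /Popt /= !kron2_delta.
apply/matrixP => i j; rewrite !mxE -!val_eqE /= !inordK //.
case: i j => [[|[|[|[|//]]]] ?] [[|[|[|[|//]]]] ?] /=; rewrite ?(add0r, addr0) //.
Qed.

Lemma Popt_val j : \tr (Popt j *m Bell C j) = 2^-1.
Proof.
case: j => [[|[|[|[|//]]]] hj].
- change (Bell C (Ordinal hj)) with (Bell C 0); rewrite /Popt /= trBell0 !mxE !eqxx ?i10 ?i01 /=; ring.
- change (Bell C (Ordinal hj)) with (Bell C 1); rewrite /Popt /= trBell1 !mxE !eqxx ?i10 ?i01 /=; ring.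
- change (Bell C (Ordinal hj)) with (Bell C 2); rewrite /Popt /= trBell2 !mxE !eqxx ?i10 ?i01 /=; ring.
- change (Bell C (Ordinal hj)) with (Bell C 3); rewrite /Popt /= trBell3 !mxE !eqxx ?i10 ?i01 /=; ring.
Qed.

End S.

Theorem mainTheorem6 (C : numClosedFieldType) : Qsep_Bell_is (2^-1 : C).
Proof.
split.
- move=> F [hpsd [hsep hsum]]; rewrite /sep_value.
  have H : \sum_j \tr (F j *m Bell C j) <= \sum_j 2^-1 * \tr (F j).
    by apply: ler_sum => j _; exact: tr_sep.
  have E : \sum_j 2^-1 * \tr (F j) = 2^-1 * (2*2)%:R.
    by rewrite -mulr_sumr -linear_sum /= hsum mxtrace1.
  rewrite E in H.
  apply: le_trans (ler_wpM2l _ H) _; first by rewrite invr_ge0 ler0n.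
  by rewrite mulrCA mulVf ?mulr1 // pnatr_eq0.
- exists (@Popt C); split.
    split; first exact: Popt_psd.
    split; first exact: Popt_sep.
    exact: Popt_sum.
  rewrite /sep_value (eq_bigr (fun _ => 2^-1)); last by move=> j _; exact: Popt_val.
  rewrite sumr_const card_ord -mulr_natr; field; done.
Qed.
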